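(* Let $(\mathcal{S},\mathcal{A},P,R)$ be a finite Markov decision process with state space $\mathcal{S}=\{1,\dots,n\}$, finite action space $\mathcal{A}$, transition probabilities $P(s'\mid s,a)$ and reward $R(s,a,s')$, and let $\gamma\in[0,1)$. Define the Bellman operator $T:\mathbb{R}^n\to\mathbb{R}^n$ by $$(TV)(s)=\max_{a\in\mathcal{A}}\sum_{s'\in\mathcal{S}}P(s'\mid s,a)\big[R(s,a,s')+\gamma V(s')\big],$$ and let $V^*$ be the optimal value vector, i.e. the unique solution of $V^*=TV^*$. Fix $\epsilon>0$. Let $(s_k)_{k\ge 0}$ be a sequence of states (the state updated at iteration $k$) and consider the asynchronous noisy value iteration: for an arbitrary initial vector $\tilde V_0\in\mathbb{R}^n$, $$\tilde V_{k+1}(s)=\begin{cases}(T\tilde V_k)(s_k)+\tilde w_k, & s=s_k,\\ \tilde V_k(s), & s\neq s_k,\end{cases}$$ where the noise terms $\tilde w_k\in\mathbb{R}$ satisfy $|\tilde w_k|\le\epsilon$ for all $k$. Assume (a) every state is updated infinitely often, i.e. each $s\in\mathcal{S}$ equals $s_k$ for infinitely many $k$; and (b) there is a finite constant $M$ such that, defining $k_0=0$ and $k_{n+1}$ as the smallest index greater than $k_n$ such that every state of $\mathcal{S}$ is updated at least once at the iterations strictly after $k_n$ and up to $k_{n+1}$, one has $k_{n+1}-k_n\le M$ for all $n$. Then $$\limsup_{n\to\infty}\|V^*-\tilde V_{k_n}\|_\infty\le\frac{M\epsilon}{1-\gamma}.$$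
   Context: $\|\cdot\|_\infty$ denotes the maximum norm on $\mathbb{R}^n$. The noise $\tilde w_k$ models error introduced by computing the Bellman update homomorphically under an encryption scheme; it is only assumed to be bounded in absolute value by $\epsilon$ (it need not vanish). The noise may equivalently be thought of as entering inside the maximum, i.e. $\tilde V_{k+1}(s_k)=\max_a\big(\sum_{s'}P(s'\mid s_k,a)[R(s_k,a,s')+\gamma\tilde V_k(s')]+w_k(s_k,a)\big)$ with $|w_k(s_k,a)|\le\epsilon$, which yields an update of the stated form. *)

(* Defs.v *)
From HB Require Import structures.
From mathcomp Require Import all_boot all_order all_algebra.
From mathcomp Require Import all_classical all_reals all_analysis.
Set Implicit Arguments. Unset Strict Implicit. Unset Printing Implicit Defensive.
Import Order.TTheory GRing.Theory Num.Theory.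
Local Open Scope ring_scope.

(* Finite MDP with states 'I_n and a nonempty finite action type A
   (a0 is a witness of nonemptiness, used only as the seed of the max). *)

Definition bellman (R : realType) (n : nat) (A : finType) (a0 : A)
  (P : 'I_n -> A -> 'I_n -> R) (Rw : 'I_n -> A -> 'I_n -> R) (gamma : R)
  (V : 'I_n -> R) (s : 'I_n) : R :=
  let Q := fun a : A => \sum_(s' < n) P s a s' * (Rw s a s' + gamma * V s') in
  \big[Num.max/Q a0]_(a : A) Q a.

Definition sup_norm (R : realType) (n : nat) (V : 'I_n -> R) : R :=
  \big[Num.max/0]_(i < n) `|V i|.

Definition all_updated (n : nat) (st : nat -> 'I_n) (lo hi : nat) : Prop :=
  forall s : 'I_n, exists k, (lo < k <= hi)%N /\ st k = s.

(* Main.v *)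
Require Import Defs.
From HB Require Import structures.
From mathcomp Require Import all_boot all_order all_algebra.
From mathcomp Require Import all_classical all_reals all_analysis.
From mathcomp Require Import ring lra zify.
Import Order.TTheory GRing.Theory Num.Theory.
Local Open Scope ring_scope.
Local Open Scope classical_set_scope.

Lemma sup_norm_ge {R : realType} {n} (V : 'I_n -> R) i : `|V i| <= sup_norm V.
Proof. rewrite /sup_norm; exact: (le_bigmax _ (fun i => `|V i|)). Qed.

Lemma sup_norm_ge0 (R : realType) n (V : 'I_n -> R) : 0 <= sup_norm V.
Proof. by rewrite /sup_norm; elim/big_ind: _ => // x y; rewrite le_max => ->. Qed.

Lemma sup_norm_le (R : realType) n (V : 'I_n -> R) b :
  0 <= b -> (forall i, `|V i| <= b) -> sup_norm V <= b.
Proof. by move=> b0 H; apply: bigmax_le. Qed.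

Lemma max_lip (R : realType) (x1 y1 x2 y2 b : R) :
  `|x1 - x2| <= b -> `|y1 - y2| <= b -> `|Num.max x1 y1 - Num.max x2 y2| <= b.
Proof.
move=> /ler_normlP [h1 h2] /ler_normlP [h3 h4]; apply/ler_normlP.
case: (leP x1 y1) => ?; case: (leP x2 y2) => ?; split; lra.
Qed.

Lemma bellman_contr (R : realType) (n : nat) (A : finType) (a0 : A)
  (P : 'I_n -> A -> 'I_n -> R) (Rw : 'I_n -> A -> 'I_n -> R) (gamma : R) V W s :
  (forall s a s', 0 <= P s a s') ->
  (forall s a, \sum_(s' < n) P s a s' = 1) -> 0 <= gamma ->
  `|bellman a0 P Rw gamma V s - bellman a0 P Rw gamma W s|
    <= gamma * sup_norm (fun i => V i - W i).
Proof.
move=> P0 P1 g0; rewrite /bellman.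
set b := gamma * _.
have Hq : forall a, `|\sum_(s' < n) P s a s' * (Rw s a s' + gamma * V s') -
   \sum_(s' < n) P s a s' * (Rw s a s' + gamma * W s')| <= b.
  move=> a; rewrite -sumrB.
  apply: le_trans (ler_norm_sum _ _ _) _.
  apply: (@le_trans _ _ (\sum_(i < n) P s a i * b)).
    apply: ler_sum => i _.
    rewrite -mulrBr normrM ger0_norm // ler_wpM2l //.
    have -> : Rw s a i + gamma * V i - (Rw s a i + gamma * W i) = gamma * (V i - W i) by ring.
    rewrite normrM ger0_norm // ler_wpM2l //.
    exact: (sup_norm_ge (fun j => V j - W j) i).
  by rewrite -mulr_suml P1 mul1r.
apply: (big_ind2 (fun x y => `|x - y| <= b)) => //.
move=> *; exact: max_lip.
Qed.

Theorem theorem2 (R : realType) (n : nat) (A : finType) (a0 : A)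
  (P : 'I_n -> A -> 'I_n -> R) (Rw : 'I_n -> A -> 'I_n -> R) (gamma eps : R)
  (Vstar : 'I_n -> R) (st : nat -> 'I_n) (w : nat -> R)
  (Vt : nat -> 'I_n -> R) (kseq : nat -> nat) (M : R) :
  (forall s a s', 0 <= P s a s') ->
  (forall s a, \sum_(s' < n) P s a s' = 1) ->
  0 <= gamma -> gamma < 1 ->
  (forall s, Vstar s = bellman a0 P Rw gamma Vstar s) ->
  0 < eps ->
  (forall k, `|w k| <= eps) ->
  (forall k s, Vt k.+1 s =
     if s == st k then bellman a0 P Rw gamma (Vt k) (st k) + w k else Vt k s) ->
  (* (a) every state is updated infinitely often *)
  (forall s N, exists k, (N <= k)%N /\ st k = s) ->
  (* (b) k_0 = 0 and k_{m+1} is the smallest index > k_m such that every state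
     is updated in (k_m, k_{m+1}] *)
  kseq 0%N = 0%N ->
  (forall m, (kseq m < kseq m.+1)%N /\ all_updated st (kseq m) (kseq m.+1) /\
     forall j, (kseq m < j < kseq m.+1)%N -> ~ all_updated st (kseq m) j) ->
  (forall m, ((kseq m.+1 - kseq m)%N)%:R <= M) ->
  (limn_esup (fun m => (sup_norm (fun s => Vstar s - Vt (kseq m) s))%:E)
     <= (M * eps / (1 - gamma))%:E)%E.
Proof.
move=> P0 P1 g0 g1 HV eps0 Hw HVt Hinf Hk0 Hks HM.
pose e k s := Vstar s - Vt k s.
pose D k := sup_norm (e k).
have D0 k : 0 <= D k by apply: sup_norm_ge0.
have De k s : `|e k s| <= D k by apply: sup_norm_ge.
pose c := eps / (1 - gamma).
have c0 : 0 <= c by rewrite /c divr_ge0 // ?ltW // subr_gt0.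
have hc : gamma * c + eps = c.
  rewrite /c; field; rewrite subr_eq0; apply/eqP => h; move: g1; by rewrite -h ltxx.
have hcdef : eps / (1 - gamma) = c by [].
clearbody c.
have Hupd k : `|e k.+1 (st k)| <= gamma * D k + eps.
  rewrite /e HVt eqxx {1}HV.
  have -> : bellman a0 P Rw gamma Vstar (st k) - (bellman a0 P Rw gamma (Vt k) (st k) + w k)
    = (bellman a0 P Rw gamma Vstar (st k) - bellman a0 P Rw gamma (Vt k) (st k)) - w k by ring.
  apply: le_trans (ler_normB _ _) _; apply: lerD; last exact: Hw.
  exact: bellman_contr.
have Hother k s : s != st k -> e k.+1 s = e k s.
  by move=> hneq; rewrite /e HVt (negbTE hneq).
have key N x : 0 <= x -> (forall k, (N <= k)%N -> D k <= c + x) ->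
    exists N', forall k, (N' <= k)%N -> D k <= c + gamma * x.
  move=> x0 H.
  have inner : forall k, forall s, (exists j, (N <= j < k)%N /\ st j = s) ->
      `|e k s| <= c + gamma * x.
    elim=> [|k IH] s [j [Hj Hs]]; first by move: Hj; rewrite ltn0 andbF.
    case: (eqVneq s (st k)) => [->|neq].
      have Nk : (N <= k)%N by lia.
      apply: le_trans (Hupd k) _.
      have hh := ler_wpM2l g0 (H k Nk); rewrite mulrDr in hh; lra.
    rewrite Hother //; apply: IH; exists j; split => //.
    have jk : j != k by apply/eqP => ejk; move: neq; rewrite -Hs ejk eqxx.
    lia.
  have exP s : exists j, (N <= j)%N && (st j == s).
    by have [j [h1 h2]] := Hinf s N; exists j; rewrite h1 h2 eqxx.
  pose f : 'I_n -> nat := fun s => xchoose (exP s).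
  exists (maxn N (\max_(s : 'I_n) f s).+1) => k Hk.
  apply: sup_norm_le; first by have := ler_wpM2l g0 x0; lra.
  move=> s; apply: inner; exists (f s).
  have /andP[h1 /eqP h2] := xchooseP (exP s).
  split => //; rewrite h1 /=.
  have := @leq_bigmax _ f s; move=> hm; apply: leq_trans _ Hk; by rewrite leq_max ltnS hm orbT.
have base k : D k <= c + D 0%N.
  elim: k => [|k IH]; first lra.
  apply: sup_norm_le; first by have := D0 0%N; lra.
  move=> s; case: (eqVneq s (st k)) => [->|neq].
    apply: le_trans (Hupd k) _.
    have hh := ler_wpM2l g0 IH; rewrite mulrDr in hh.
    have : gamma * D 0%N <= D 0%N by rewrite ler_piMl // ltW.
    lra.
  by rewrite Hother //; apply: le_trans (De k s) IH.
have iter i : exists N, forall k, (N <= k)%N -> D k <= c + gamma ^+ i * D 0%N.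
  elim: i => [|i [N HN]]; first by exists 0%N => k _; rewrite expr0 mul1r.
  have [N' HN'] := key N _ (mulr_ge0 (exprn_ge0 i g0) (D0 0%N)) HN.
  by exists N' => k Hk; rewrite exprS -mulrA; apply: HN'.
have kge m : (m <= kseq m)%N.
  elim: m => [|m IH] //; have [h _] := Hks m; lia.
have M1 : 1 <= M.
  apply: le_trans (HM 0%N); rewrite ler1n subn_gt0; by case: (Hks 0%N).
apply/lee_addgt0Pr => d d0.
have hcv : (fun i => gamma ^+ i * D 0%N) @ \oo --> 0.
  rewrite -(mul0r (D 0%N)); apply: cvgMr_tmp; apply: cvg_expr.
  by rewrite ger0_norm.
have [i0 _ Hi0] := (cvgrPdist_lt _ _).1 hcv d d0.
have := Hi0 i0 (leqnn i0); rewrite /= sub0r normrN => hi.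
have [N HN] := iter i0.
apply: (@le_trans _ _ (c + d)%:E); last first.
  rewrite lee_fin lerD2r -mulrA.
  rewrite hcdef.
  by rewrite ler_peMl.
rewrite /limn_esup /limf_esup.
apply: (@le_trans _ _ (ereal_sup ((fun m => (sup_norm (fun s => Vstar s - Vt (kseq m) s))%:E) @` [set m | (N <= m)%N]))).
  apply: ereal_inf_lbound; exists [set m | (N <= m)%N] => //; by exists N.
apply: ub_ereal_sup => _ [m Hm <-]; rewrite lee_fin.
have Nk : (N <= kseq m)%N by move: (kge m) Hm => /=; lia.
have := HN _ Nk; have := ler_norm (gamma ^+ i0 * D 0%N); rewrite /D /e; lra.
Qed.
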